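(* Let $G$ be a graph of order $n$. Then $a(G)+a(\overline{G})\le n+4$. Moreover, this bound is sharp: for every $n\ge 4$, the path $P_n$ on $n$ vertices satisfies $a(P_n)+a(\overline{P_n})=n+4$.
   Context: All graphs are finite and simple; $\overline{G}$ denotes the complement of $G$. For a graph $G$, $a(G)$ denotes the maximum number of vertices of an induced subgraph of $G$ that is a forest. The order of a graph is its number of vertices. *)

(* Defs.v *)
From Stdlib Require Import ClassicalEpsilon.
From mathcomp Require Import all_boot.
Set Implicit Arguments. Unset Strict Implicit. Unset Printing Implicit Defensive.

Definition simple_graph (T : finType) (e : rel T) : Prop :=
  symmetric e /\ irreflexive e.

Definition compl_graph (T : finType) (e : rel T) : rel T :=
  fun x y => (x != y) && ~~ e x y.

Definition is_graph_cycle (T : finType) (e : rel T) (c : seq T) : bool :=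
  [&& 3 <= size c, uniq c & cycle e c].

Definition induces_forest (T : finType) (e : rel T) (S : {set T}) : Prop :=
  forall c : seq T, all (fun v => v \in S) c -> ~~ is_graph_cycle e c.

Definition asbool (P : Prop) : bool :=
  if excluded_middle_informative P then true else false.

Definition a_forest (T : finType) (e : rel T) : nat :=
  \max_(S : {set T} | asbool (induces_forest e S)) #|S|.

Definition path_graph (n : nat) : rel 'I_n :=
  fun i j => (i.+1 == j :> nat) || (j.+1 == i :> nat).
Arguments path_graph n : clear implicits.

(* Main.v *)
Require Import Defs.
From mathcomp Require Import all_boot.
From Stdlib Require Import ClassicalEpsilon.

Definition cands : seq (seq nat) := [:: [:: 0; 1; 2]; [:: 0; 1; 3]; [:: 0; 1; 4]; [:: 0; 2; 3]; [:: 0; 2; 4]; [:: 0; 3; 4]; [:: 1; 2; 3]; [:: 1; 2; 4]; [:: 1; 3; 4]; [:: 2; 3; 4]; [:: 0; 1; 2; 3]; [:: 0; 1; 3; 2]; [:: 0; 2; 1; 3]; [:: 0; 1; 2; 4]; [:: 0; 1; 4; 2]; [:: 0; 2; 1; 4]; [:: 0; 1; 3; 4]; [:: 0; 1; 4; 3]; [:: 0; 3; 1; 4]; [:: 0; 2; 3; 4]; [:: 0; 2; 4; 3]; [:: 0; 3; 2; 4]; [:: 1; 2; 3; 4]; [:: 1; 2; 4; 3]; [:: 1; 3; 2; 4]; [:: 0; 1; 2; 3; 4]; [:: 0; 1; 2; 4; 3]; [:: 0; 1; 3; 2; 4]; [:: 0; 1; 3; 4; 2]; [:: 0; 1; 4;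 2; 3]; [:: 0; 1; 4; 3; 2]; [:: 0; 2; 1; 3; 4]; [:: 0; 2; 1; 4; 3]; [:: 0; 2; 3; 1; 4]; [:: 0; 2; 4; 1; 3]; [:: 0; 3; 1; 2; 4]; [:: 0; 3; 2; 1; 4]].

Lemma five (g : nat -> nat -> bool) : (forall i j, g i j = g j i) ->
  exists c, [/\ all (fun i => i < 5) c, uniq c, 3 <= size c &
     (cycle g c || cycle (fun i j => (i != j) && ~~ g i j) c)].
Proof.
move=> gs.
suff: has (fun c => cycle g c || cycle (fun i j => (i != j) && ~~ g i j) c) cands.
  case/hasP=> c cin H; exists c; split=> //.
  - by move: c cin {H}; apply/allP.
  - by move: c cin {H}; apply/allP.
  - by move: c cin {H}; apply/allP.
pose h i j := if i < j then g i j else g j i.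
have gh : g =2 h by move=> i j; rewrite /h; case: ltnP.
rewrite (eq_has (a2 := fun c => cycle h c || cycle (fun i j => (i != j) && ~~ h i j) c)); last first.
  move=> c /=; rewrite (eq_cycle gh c); congr (_ || _); apply: eq_cycle => i j; by rewrite gh.
rewrite /h /=.
case: (g 0 1); case: (g 0 2); case: (g 0 3); case: (g 0 4); case: (g 1 2);
case: (g 1 3); case: (g 1 4); case: (g 2 3); case: (g 2 4); case: (g 3 4); by [].
Qed.

Lemma asboolT (P : Prop) : P -> asbool P = true.
Proof. by rewrite /asbool; case: excluded_middle_informative. Qed.
Lemma asboolE (P : Prop) : asbool P = true -> P.
Proof. by rewrite /asbool; case: excluded_middle_informative. Qed.

Lemma small_inter (T : finType) (e : rel T) (I : {set T}) :
  simple_graph e -> induces_forest e I -> induces_forest (compl_graph e) I ->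
  #|I| <= 4.
Proof.
move=> [es _] F1 F2; rewrite leqNgt; apply/negP => big.
have [x0 _] : exists x0, x0 \in I.
  by apply/set0Pn; rewrite -card_gt0; apply: leq_trans big.
pose s := enum I.
have ss : 5 <= size s by rewrite /s -cardE.
pose x i := nth x0 s i.
have xI i : i < 5 -> x i \in I.
  by move=> lt; rewrite -mem_enum; apply: mem_nth; apply: leq_trans ss.
have xinj i j : i < 5 -> j < 5 -> (x i == x j) = (i == j).
  move=> hi hj; apply: nth_uniq; [exact: leq_trans ss|exact: leq_trans ss|exact: enum_uniq].
have [c [call cu cs cc]] := @five (fun i j => e (x i) (x j)) (fun i j => es _ _).
have mall : all (fun v => v \in I) (map x c).
  by rewrite all_map; apply/allP => i ic /=; apply: xI; apply: (allP call).
have mu : uniq (map x c).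
  rewrite map_inj_in_uniq // => i j ic jc /eqP; rewrite xinj ?(allP call) //; by move/eqP.
case/orP: cc => cc.
- move: (F1 _ mall); rewrite /is_graph_cycle size_map cs mu cycle_map.
  by rewrite cc.
- move: (F2 _ mall); rewrite /is_graph_cycle size_map cs mu cycle_map.
  rewrite (@eq_in_cycle _ (fun i => i < 5) _ (fun i j => (i != j) && ~~ e (x i) (x j))) //.
  - by rewrite cc.
  - by move=> i j hi hj /=; rewrite /compl_graph xinj.
Qed.

Lemma part1 (T : finType) (e : rel T) : simple_graph e ->
  a_forest e + a_forest (compl_graph e) <= #|T| + 4.
Proof.
move=> sg.
have H : forall S1 S2 : {set T}, induces_forest e S1 -> induces_forest (compl_graph e) S2 ->
   #|S1| + #|S2| <= #|T| + 4.
  move=> S1 S2 F1 F2; rewrite -cardsUI; apply: leq_add; first exact: max_card.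
  apply: (@small_inter _ e) => //.
  - by move=> c call; apply: F1; apply/allP => v /(allP call); rewrite inE => /andP[].
  - by move=> c call; apply: F2; apply/allP => v /(allP call); rewrite inE => /andP[].
have F0 : forall f : rel T, induces_forest f set0.
  by move=> f [|v c] //= /andP[]; rewrite inE.
rewrite /a_forest.
have [S1 h1 ->] := eq_bigmax_cond (A := [pred S : {set T} | asbool (induces_forest e S)]) (fun S => #|S|)
   (introT card_gt0P (ex_intro _ set0 (@asboolT _ (F0 e)))).
have [S2 h2 ->] := eq_bigmax_cond (A := [pred S : {set T} | asbool (induces_forest (compl_graph e) S)]) (fun S => #|S|)
   (introT card_gt0P (ex_intro _ set0 (@asboolT _ (F0 _)))).
by apply: H; apply: asboolE.
Qed.
Definition adj (a b : nat) := (a.+1 == b) || (b.+1 == a).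

Lemma max_in (d : seq nat) : d != [::] -> exists2 m, m \in d & all (fun v => v <= m) d.
Proof.
elim: d => [//|a d IH] _.
case: d IH => [|b d] IH.
  by exists a; rewrite /= ?inE ?leqnn.
have [m mi ma] := IH isT.
case: (leqP a m) => am.
- exists m; first by rewrite inE mi orbT.
  by rewrite /= am; exact: ma.
- exists a; first by rewrite inE eqxx.
  apply/allP => v; rewrite inE => /orP[/eqP->|vi]; first exact: leqnn.
  exact: leq_trans (allP ma v vi) (ltnW am).
Qed.

Lemma no_adj_cycle (d : seq nat) : uniq d -> 3 <= size d -> ~~ cycle adj d.
Proof.
move=> u s; apply/negP => c.
have [m mi ma] : exists2 m, m \in d & all (fun v => v <= m) d.
  by apply: max_in; case: d s {u c}.
move: (rot_index mi); set d' := rot _ d => dE.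
have u' : uniq d' by rewrite rot_uniq.
have c' : cycle adj d' by rewrite rot_cycle.
have a' : all (fun v => v <= m) d' by apply/allP => v; rewrite mem_rot; apply: (allP ma).
have s' : 3 <= size d' by rewrite size_rot.
move: u' c' a' s'; rewrite dE; set t := _ ++ _.
case: t => [|y r] //; case/lastP: r => [|r w] //.
rewrite /= !inE rcons_path /= rcons_uniq last_rcons.
move=> /and4P[_ yn _ _] /and3P[my _ wm] /and3P[_ ym wa] _.
move: yn; rewrite mem_rcons inE negb_or => /andP[yw _].
move: wa; rewrite all_rcons => /andP[wm' _].
move: my wm; rewrite /adj.
case/orP=> /eqP h1; first by move: ym; rewrite -h1 ltnn.
case/orP=> /eqP h2; last by move: wm'; rewrite -h2 ltnn.
by move: yw; rewrite -h2 in h1; case: h1 => ->; rewrite eqxx.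
Qed.

Lemma forest_of_adj (T : finType) (e : rel T) (S : {set T}) (f : T -> nat) :
  {in S &, injective f} -> {in S &, forall x y, e x y -> adj (f x) (f y)} ->
  induces_forest e S.
Proof.
move=> fi fa c call; apply/negP => /and3P[cs cu cc].
have := @no_adj_cycle (map f c).
rewrite map_inj_in_uniq ?size_map ?cu // ?cs; last first.
  by move=> x y xc yc; apply: fi; apply: (allP call).
rewrite cycle_map => /(_ isT isT)/negP; apply.
exact: (sub_in_cycle (P := fun v => v \in S) fa call cc).
Qed.

Lemma part2 (n : nat) : 4 <= n ->
  a_forest (path_graph n) + a_forest (compl_graph (path_graph n)) = n + 4.
Proof.
move=> n4; apply/eqP; rewrite eqn_leq.
have sg : simple_graph (path_graph n).
  split.
  - by move=> i j; rewrite /path_graph orbC.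
  - by move=> i; rewrite /path_graph -[i.+1 == i]/(i.+1 == i :> nat) eqn_leq ltnn.
rewrite (leq_trans (@part1 _ _ sg)) ?card_ord //=.
apply: leq_add.
- have Ff : induces_forest (path_graph n) [set: 'I_n].
    apply: (@forest_of_adj _ _ _ (fun i : 'I_n => val i)).
    + by move=> x y _ _; apply: val_inj.
    + by move=> x y _ _.
  rewrite /a_forest; apply: leq_trans _ (@leq_bigmax_cond _ (fun S => asbool (induces_forest _ S)) (fun S : {set 'I_n} => #|S|) setT (@asboolT _ Ff)).
  by rewrite cardsT card_ord.
- pose w (i : 'I_4) : 'I_n := widen_ord n4 i.
  pose S := [set w i | i : 'I_4].
  have wi : injective w by move=> i j /(congr1 val) /= /val_inj.
  have Sc : #|S| = 4 by rewrite card_imset // card_ord.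
  have Sl : forall x, x \in S -> val x < 4.
    by move=> x /imsetP [i _ ->] /=.
  have Ff : induces_forest (compl_graph (path_graph n)) S.
    apply: (@forest_of_adj _ _ _ (fun i : 'I_n => nth 0 [:: 1; 3; 0; 2] (val i))).
    + move=> x y /Sl xl /Sl yl /= h; apply: val_inj.
      move: x y xl yl h => [[|[|[|[|x]]]] ?] [[|[|[|[|y]]]] ?] //=.
    + move=> x y /Sl xl /Sl yl.
      move: x y xl yl => [[|[|[|[|x]]]] ?] [[|[|[|[|y]]]] ?] //=.
  rewrite /a_forest; apply: leq_trans _ (@leq_bigmax_cond _ (fun S => asbool (induces_forest _ S)) (fun S : {set 'I_n} => #|S|) S (@asboolT _ Ff)).
  by rewrite Sc.
Qed.

Theorem theorem3 :
  (forall (T : finType) (e : rel T), simple_graph e ->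
     a_forest e + a_forest (compl_graph e) <= #|T| + 4)
  /\
  (forall n : nat, 4 <= n ->
     a_forest (path_graph n) + a_forest (compl_graph (path_graph n)) = n + 4).
Proof. split; [exact: part1 | exact: part2]. Qed.
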